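(* Consider a switched descriptor system $E_{\sigma(t)}\dot x=A_{\sigma(t)}x$, $\sigma(t)\in\{1,\dots,N\}$, with each $A_i$ nonsingular. For each $i$ let $C_i$ be a matrix such that $x\in\mathcal{C}(E_i,A_i)$ if and only if $C_ix=0$. Suppose there is a symmetric matrix $P$ such that for all $i=1,\dots,N$, $$P+C_i^TC_i>0,\qquad PA_i^{-1}E_i+E_i^TA_i^{-T}P-C_i^TC_i<0,$$ and that for every solution, $x(t_*^+)^TPx(t_*^+)\le x(t_*^-)^TPx(t_*^-)$ whenever $\sigma$ switches at $t_*$. Then the system is GUES.
   Context: For $E,A\in\mathbb{R}^{n\times n}$ with $A$ nonsingular, $(E,A)$ denotes the descriptor system $E\dot x=Ax$; its index is the smallest $k^*\ge0$ with $\mathrm{Im}((A^{-1}E)^{k^*+1})=\mathrm{Im}((A^{-1}E)^{k^*})$ and its consistency space is $\mathcal{C}(E,A)=\mathrm{Im}((A^{-1}E)^{k^*})$. Switched descriptor system: the switching signal $\sigma$ is piecewise constant with values in $\{1,\dots,N\}$ and finitely many discontinuities in every bounded interval. A solution is a function $x(\cdot)$ that is differentiable and satisfies $E_{\sigma(t)}\dot x(t)=A_{\sigma(t)}x(t)$ at every $t$ where $\sigma$ is continuous, and has one-sided limits $x(t_*^\pm)$ at each discontinuity $t_*$ of $\sigma$; the equation is not required at discontinuities, and the relation between $x(t_*^+)$ and $x(t_*^-)$ and the allowed switches are part of the system specification. The system is GUES if there exist $\beta,\alpha>0$ such that every solution satisfies $\|x(t)\|\le\beta e^{-\alpha(t-t_0)}\|x(t_0)\|$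 for all $t\ge t_0$. $M>0$ ($M<0$) means positive (negative) definite. *)

(* Defs.v *)
(* real analysis (derivatives, exp) over Stdlib Reals.
   Matrices are represented as functions nat -> nat -> R; only the entries
   with indices below the relevant dimension are meaningful. *)
From Stdlib Require Import Reals Lra List.
Open Scope R_scope.

Definition vec := nat -> R.
Definition mat := nat -> nat -> R.

Fixpoint rsum (n : nat) (f : nat -> R) : R :=
  match n with O => 0 | S k => rsum k f + f k end.

Definition idm : mat := fun i j => if Nat.eqb i j then 1 else 0.
Definition mulmv (n : nat) (M : mat) (v : vec) : vec :=
  fun i => rsum n (fun k => M i k * v k).
Definition mulmm (n : nat) (M N : mat) : mat :=
  fun i j => rsum n (fun k => M i k * N k j).
Definition tr (M : mat) : mat := fun i j => M j i.
Definition madd (M N : mat) : mat := fun i j => M i j + N i j.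
Definition msub (M N : mat) : mat := fun i j => M i j - N i j.
Definition mpow (n : nat) (M : mat) (k : nat) : mat := Nat.iter k (mulmm n M) idm.

Definition gram (m : nat) (C : mat) : mat :=
  fun j k => rsum m (fun r => C r j * C r k).

Definition quad (n : nat) (P : mat) (v : vec) : R :=
  rsum n (fun i => v i * rsum n (fun j => P i j * v j)).

Definition vnonzero (n : nat) (v : vec) : Prop := exists j, (j < n)%nat /\ v j <> 0.
Definition symmetric (n : nat) (P : mat) : Prop :=
  forall i j, (i < n)%nat -> (j < n)%nat -> P i j = P j i.
Definition posdef (n : nat) (P : mat) : Prop :=
  forall v, vnonzero n v -> 0 < quad n P v.
Definition negdef (n : nat) (P : mat) : Prop :=
  forall v, vnonzero n v -> quad n P v < 0.

Definition is_inverse (n : nat) (A B : mat) : Prop :=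
  forall i j, (i < n)%nat -> (j < n)%nat ->
    mulmm n A B i j = idm i j /\ mulmm n B A i j = idm i j.

Definition inIm (n : nat) (M : mat) (v : vec) : Prop :=
  exists y : vec, forall j, (j < n)%nat -> v j = mulmv n M y j.

Definition im_stable (n : nat) (M : mat) (k : nat) : Prop :=
  forall v, inIm n (mpow n M (S k)) v <-> inIm n (mpow n M k) v.

Definition is_index (n : nat) (M : mat) (k : nat) : Prop :=
  im_stable n M k /\ forall j, (j < k)%nat -> ~ im_stable n M j.

(* consistency space C(E,A) = Im((A^{-1}E)^{k*}), with M = A^{-1} E *)
Definition in_cons (n : nat) (M : mat) (v : vec) : Prop :=
  exists k, is_index n M k /\ inIm n (mpow n M k) v.

Definition euclid_norm (n : nat) (v : vec) : R := sqrt (rsum n (fun j => v j ^ 2)).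

Definition sigma_cont (sigma : R -> nat) (t : R) : Prop :=
  exists d, 0 < d /\ forall s, Rabs (s - t) < d -> sigma s = sigma t.

Definition right_lim (n : nat) (x : R -> vec) (t : R) (v : vec) : Prop :=
  forall j, (j < n)%nat -> forall eps, 0 < eps ->
    exists d, 0 < d /\ forall s, t < s < t + d -> Rabs (x s j - v j) < eps.

Definition left_lim (n : nat) (x : R -> vec) (t : R) (v : vec) : Prop :=
  forall j, (j < n)%nat -> forall eps, 0 < eps ->
    exists d, 0 < d /\ forall s, t - d < s < t -> Rabs (x s j - v j) < eps.

(* switching signal on [t0, oo): values in {1..N}, piecewise constant with
   finitely many discontinuities in every bounded interval *)
Definition switching_signal (N : nat) (t0 : R) (sigma : R -> nat) : Prop :=
  (forall t, t0 <= t -> (1 <= sigma t <= N)%nat) /\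
  (forall a b, exists l : list R,
     forall s u, t0 <= s -> t0 <= u -> a <= s <= b -> a <= u <= b ->
       (forall p, In p l -> ~ (Rmin s u <= p <= Rmax s u)) ->
       sigma s = sigma u).

Definition is_solution (n N : nat) (E A : nat -> mat) (t0 : R)
    (sigma : R -> nat) (x : R -> vec) : Prop :=
  switching_signal N t0 sigma /\
  (forall t, t0 < t -> sigma_cont sigma t ->
     exists dx : vec,
       (forall j, (j < n)%nat -> derivable_pt_lim (fun s => x s j) t (dx j)) /\
       (forall j, (j < n)%nat ->
          mulmv n (E (sigma t)) dx j = mulmv n (A (sigma t)) (x t) j)) /\
  (forall t, t0 < t -> exists v, left_lim n x t v) /\
  (forall t, t0 <= t -> right_lim n x t (x t)).

Definition jump_nonincreasing (n : nat) (P : mat) (t0 : R)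
    (sigma : R -> nat) (x : R -> vec) : Prop :=
  forall t, t0 < t -> ~ sigma_cont sigma t ->
    forall v, left_lim n x t v -> quad n P (x t) <= quad n P v.

(* Main.v *)
Require Import Defs.
From Stdlib Require Import Reals Lra Lia FunctionalExtensionality ClassicalEpsilon Classical.
Open Scope R_scope.

Lemma rsum_ext n f g : (forall i, (i < n)%nat -> f i = g i) -> rsum n f = rsum n g.
Proof.
induction n; intros H; simpl; auto.
rewrite IHn by (intros; apply H; lia). rewrite (H n) by lia. reflexivity.
Qed.

Lemma rsum_plus n f g : rsum n (fun i => f i + g i) = rsum n f + rsum n g.
Proof. induction n; simpl; [ring|rewrite IHn; ring]. Qed.

Lemma rsum_minus n f g : rsum n (fun i => f i - g i) = rsum n f - rsum n g.
Proof. induction n; simpl; [ring|rewrite IHn; ring]. Qed.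

Lemma rsum_scal n c f : rsum n (fun i => c * f i) = c * rsum n f.
Proof. induction n; simpl; [ring|rewrite IHn; ring]. Qed.

Lemma rsum_zero n f : (forall i, (i < n)%nat -> f i = 0) -> rsum n f = 0.
Proof.
intros H. transitivity (rsum n (fun _ => 0)).
- apply rsum_ext; auto.
- induction n; simpl; auto. rewrite IHn; [ring| intros; apply H; lia].
Qed.

Lemma rsum_swap n m f :
  rsum n (fun i => rsum m (fun j => f i j)) = rsum m (fun j => rsum n (fun i => f i j)).
Proof.
induction n; simpl.
- rewrite rsum_zero; auto.
- rewrite IHn, <- rsum_plus. reflexivity.
Qed.

Lemma rsum_le n f g : (forall i, (i < n)%nat -> f i <= g i) -> rsum n f <= rsum n g.
Proof.
induction n; intros H; simpl; [lra|].
assert (rsum n f <= rsum n g) by (apply IHn; intros; apply H; lia).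
assert (f n <= g n) by (apply H; lia). lra.
Qed.

Lemma rsum_nonneg n f : (forall i, (i < n)%nat -> 0 <= f i) -> 0 <= rsum n f.
Proof.
intros H. replace 0 with (rsum n (fun _ => 0)).
- apply rsum_le; auto.
- apply rsum_zero; auto.
Qed.

Lemma rsum_term n f i : (forall j, (j < n)%nat -> 0 <= f j) -> (i < n)%nat -> f i <= rsum n f.
Proof.
induction n; intros H hi; [lia|simpl].
destruct (Nat.eq_dec i n) as [->|hne].
- assert (0 <= rsum n f) by (apply rsum_nonneg; intros; apply H; lia). lra.
- assert (f i <= rsum n f) by (apply IHn; [intros; apply H; lia|lia]).
  assert (0 <= f n) by (apply H; lia). lra.
Qed.

Definition nsq (n : nat) (v : vec) : R := rsum n (fun j => v j ^ 2).

Lemma nsq_nonneg n v : 0 <= nsq n v.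
Proof. apply rsum_nonneg; intros; apply pow2_ge_0. Qed.

Lemma quad_expand n Q v :
  quad n Q v = rsum n (fun i => rsum n (fun j => v i * Q i j * v j)).
Proof.
unfold quad. apply rsum_ext; intros i _.
rewrite <- rsum_scal. apply rsum_ext; intros; ring.
Qed.

Lemma quad_ext n Q v w : (forall j, (j < n)%nat -> v j = w j) -> quad n Q v = quad n Q w.
Proof.
intros H. unfold quad. apply rsum_ext; intros i hi.
rewrite H by auto. f_equal. apply rsum_ext; intros j hj. rewrite H; auto.
Qed.

Lemma quad_upper n Q : exists K, 0 < K /\ forall v, quad n Q v <= K * nsq n v.
Proof.
set (S := rsum n (fun i => rsum n (fun j => Rabs (Q i j)))).
assert (HS : 0 <= S) by (apply rsum_nonneg; intros; apply rsum_nonneg; intros; apply Rabs_pos).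
exists (S + 1). split; [lra|]. intros v.
assert (quad n Q v <= S * nsq n v).
{ rewrite quad_expand. unfold S. rewrite Rmult_comm, <- rsum_scal.
  apply rsum_le; intros i hi. rewrite <- rsum_scal. apply rsum_le; intros j hj.
  assert (hvi : v i ^ 2 <= nsq n v) by (apply (rsum_term n (fun j => v j ^ 2)); auto; intros; apply pow2_ge_0).
  assert (hvj : v j ^ 2 <= nsq n v) by (apply (rsum_term n (fun j => v j ^ 2)); auto; intros; apply pow2_ge_0).
  assert (h1 : v i * Q i j * v j <= Rabs (Q i j) * Rabs (v i * v j)).
  { replace (v i * Q i j * v j) with (Q i j * (v i * v j)) by ring.
    rewrite <- Rabs_mult. apply Rle_abs. }
  assert (h2 : Rabs (v i * v j) <= nsq n v).
  { rewrite Rabs_mult. pose proof (Rabs_pos (v i)). pose proof (Rabs_pos (v j)).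
    assert (Rabs (v i) ^ 2 = v i ^ 2) by (rewrite RPow_abs; apply Rabs_pos_eq; apply pow2_ge_0).
    assert (Rabs (v j) ^ 2 = v j ^ 2) by (rewrite RPow_abs; apply Rabs_pos_eq; apply pow2_ge_0).
    nra. }
  pose proof (Rabs_pos (Q i j)). nra. }
pose proof (nsq_nonneg n v). nra.
Qed.

Definition bil (n : nat) (P : mat) (u w : vec) : R :=
  rsum n (fun i => u i * rsum n (fun j => P i j * w j)).

Lemma quad_S n Q v : quad (S n) Q v =
  quad n Q v + v n * rsum n (fun j => (Q j n + Q n j) * v j) + Q n n * v n ^ 2.
Proof.
unfold quad at 1. simpl.
assert (E1 : rsum n (fun i => v i * (rsum n (fun j => Q i j * v j) + Q i n * v n)) =
   quad n Q v + v n * rsum n (fun j => Q j n * v j)).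
{ rewrite <- rsum_scal. unfold quad. rewrite <- rsum_plus. apply rsum_ext; intros; ring. }
assert (E2 : rsum n (fun j => (Q j n + Q n j) * v j) =
   rsum n (fun j => Q j n * v j) + rsum n (fun j => Q n j * v j)).
{ rewrite <- rsum_plus. apply rsum_ext; intros; ring. }
rewrite E1, E2. ring.
Qed.

Lemma quad_zero n Q v : (forall j, (j < n)%nat -> v j = 0) -> quad n Q v = 0.
Proof.
intros H. unfold quad. apply rsum_zero. intros i hi. rewrite H by auto. ring.
Qed.

Lemma quad_lower n : forall Q, posdef n Q -> exists c, 0 < c /\ forall v, c * nsq n v <= quad n Q v.
Proof.
induction n; intros Q HQ.
- exists 1. split; [lra|]. intros v. unfold nsq, quad; simpl. lra.
- set (q := Q n n).
  set (b := fun j => Q j n + Q n j).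
  set (sv := fun v : vec => rsum n (fun j => b j * v j)).
  assert (Hq : 0 < q).
  { set (e := fun j : nat => if Nat.eqb j n then 1 else 0).
    assert (He : vnonzero (S n) e) by (exists n; split; [lia|unfold e; rewrite Nat.eqb_refl; lra]).
    pose proof (HQ e He) as H. rewrite quad_S in H.
    rewrite quad_zero in H by (intros j hj; unfold e; destruct (Nat.eqb_spec j n); [lia|reflexivity]).
    rewrite (rsum_zero n (fun j => (Q j n + Q n j) * e j)) in H
      by (intros j hj; unfold e; destruct (Nat.eqb_spec j n); [lia|ring]).
    unfold e in H; rewrite Nat.eqb_refl in H. unfold q. lra. }
  set (Q' := fun i j => Q i j - b i * b j / (4 * q)).
  assert (HQ' : forall v, quad n Q' v = quad n Q v - sv v ^ 2 / (4 * q)).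
  { intros v. unfold quad, Q'.
    assert (E : rsum n (fun i => v i * rsum n (fun j => (Q i j - b i * b j / (4 * q)) * v j)) =
       rsum n (fun i => v i * rsum n (fun j => Q i j * v j) - (v i * b i) * (sv v / (4 * q)))).
    { apply rsum_ext; intros i hi.
      rewrite (rsum_ext n (fun j => (Q i j - b i * b j / (4 * q)) * v j)
                 (fun j => Q i j * v j - (b i / (4 * q)) * (b j * v j)))
        by (intros; field; lra).
      rewrite rsum_minus, rsum_scal. unfold sv. field. lra. }
    rewrite E, rsum_minus.
    rewrite (rsum_ext n (fun i => v i * b i * (sv v / (4 * q))) (fun i => (sv v / (4 * q)) * (b i * v i)))
      by (intros; ring).
    rewrite rsum_scal. fold (sv v). field. lra. }
  assert (HQ'pd : posdef n Q').
  { intros v Hv.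
    set (w := fun j => if Nat.eqb j n then - sv v / (2 * q) else v j).
    assert (Hw : vnonzero (S n) w).
    { destruct Hv as [j [hj hvj]]. exists j. split; [lia|]. unfold w.
      destruct (Nat.eqb_spec j n); [lia|auto]. }
    pose proof (HQ w Hw) as H. rewrite quad_S in H.
    rewrite (quad_ext n Q w v) in H by (intros j hj; unfold w; destruct (Nat.eqb_spec j n); [lia|auto]).
    rewrite (rsum_ext n (fun j => (Q j n + Q n j) * w j) (fun j => b j * v j)) in H
      by (intros j hj; unfold w, b; destruct (Nat.eqb_spec j n); [lia|auto]).
    fold (sv v) in H. unfold w in H. rewrite Nat.eqb_refl in H. fold q in H.
    rewrite HQ'.
    replace (quad n Q v - sv v ^ 2 / (4 * q)) with
      (quad n Q v + - sv v / (2 * q) * sv v + q * (- sv v / (2 * q)) ^ 2) by (field; lra).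
    exact H. }
  destruct (IHn Q' HQ'pd) as [c' [Hc' Hc'v]].
  destruct (quad_upper n (fun i j => b i * b j)) as [B [HB HBv]].
  set (K := 2 + B / (2 * q ^ 2)).
  assert (HK : 2 <= K).
  { unfold K. assert (0 < B / (2 * q ^ 2)). { apply Rdiv_lt_0_compat; [lra|]. nra. } lra. }
  set (m := Rmin c' q).
  assert (Hm : 0 < m) by (apply Rmin_pos; lra).
  exists (m / K). split; [apply Rdiv_lt_0_compat; lra|].
  intros v.
  assert (Hs : sv v ^ 2 <= B * nsq n v).
  { replace (sv v ^ 2) with (quad n (fun i j => b i * b j) v); [apply HBv|].
    unfold quad, sv. simpl. rewrite Rmult_1_r.
    rewrite <- rsum_scal.
    apply rsum_ext; intros i hi.
    rewrite (Rmult_comm (rsum n (fun j => b j * v j))), <- !rsum_scal.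
    apply rsum_ext; intros; ring. }
  set (y := v n + sv v / (2 * q)).
  assert (Hquad : quad (S n) Q v = quad n Q' v + q * y ^ 2).
  { rewrite quad_S, HQ'. fold q. unfold y. change (rsum n (fun j => (Q j n + Q n j) * v j)) with (sv v). field. lra. }
  assert (Hnsq : nsq (S n) v = nsq n v + v n ^ 2) by (unfold nsq; simpl; ring).
  assert (Hvn : v n ^ 2 <= 2 * y ^ 2 + B / (2 * q ^ 2) * nsq n v).
  { assert (v n = y - sv v / (2 * q)) by (unfold y; field; lra).
    assert (v n ^ 2 <= 2 * y ^ 2 + 2 * (sv v / (2 * q)) ^ 2).
    { rewrite H. assert (Hg : forall a c : R, (a - c)^2 <= 2*a^2 + 2*c^2) by (intros a c; pose proof (pow2_ge_0 (a + c)); nra). apply Hg. }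
    assert (2 * (sv v / (2 * q)) ^ 2 = sv v ^ 2 / (2 * q ^ 2)) by (field; lra).
    assert (sv v ^ 2 / (2 * q ^ 2) <= B / (2 * q ^ 2) * nsq n v).
    { unfold Rdiv. replace (B * / (2 * q ^ 2) * nsq n v) with ((B * nsq n v) * / (2 * q ^ 2)) by ring.
      apply Rmult_le_compat_r; [left; apply Rinv_0_lt_compat; nra | exact Hs]. }
    lra. }
  pose proof (Hc'v v).
  pose proof (nsq_nonneg n v).
  assert (Hm1 : m <= c') by apply Rmin_l.
  assert (Hm2 : m <= q) by apply Rmin_r.
  assert (H1 : m * (nsq n v + y ^ 2) <= quad (S n) Q v).
  { rewrite Hquad. assert (0 <= y ^ 2) by apply pow2_ge_0. nra. }
  assert (H2 : nsq (S n) v <= K * (nsq n v + y ^ 2)).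
  { rewrite Hnsq. unfold K. assert (0 <= y ^ 2) by apply pow2_ge_0.
    assert (0 <= B / (2 * q ^ 2)) by (unfold Rdiv; apply Rmult_le_pos; [lra|left; apply Rinv_0_lt_compat; nra]). nra. }
  unfold Rdiv. rewrite Rmult_assoc.
  apply Rle_trans with (m * (nsq n v + y ^ 2)); [|exact H1].
  apply Rmult_le_compat_l; [lra|].
  rewrite Rmult_comm. apply Rmult_le_reg_l with K; [lra|].
  replace (K * (nsq (S n) v * / K)) with (nsq (S n) v) by (field; lra). lra.
Qed.

Definition near (t : R) (side : bool) (d s : R) : Prop :=
  if side then t < s < t + d else t - d < s < t.

Definition lim_w (t : R) (side : bool) (f : R -> R) (L : R) : Prop :=
  forall eps, 0 < eps -> exists d, 0 < d /\ forall s, near t side d s -> Rabs (f s - L) < eps.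

Lemma near_mono t side d1 d2 s : d1 <= d2 -> near t side d1 s -> near t side d2 s.
Proof. unfold near; destruct side; lra. Qed.

Lemma near_abs t side d s : near t side d s -> Rabs (s - t) < d.
Proof. unfold near; destruct side; intros; apply Rabs_def1; lra. Qed.

Lemma near_ex t side d : 0 < d -> exists s, near t side d s.
Proof. intros. unfold near; destruct side; [exists (t + d/2)|exists (t - d/2)]; lra. Qed.

Lemma lim_const t side c : lim_w t side (fun _ => c) c.
Proof. intros eps he. exists 1. split; [lra|]. intros. unfold Rminus. rewrite Rplus_opp_r, Rabs_R0. auto. Qed.

Lemma lim_plus t side f g L M : lim_w t side f L -> lim_w t side g M ->
  lim_w t side (fun s => f s + g s) (L + M).
Proof.
intros Hf Hg eps he.
destruct (Hf (eps/2)) as [d1 [hd1 H1]]; [lra|].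
destruct (Hg (eps/2)) as [d2 [hd2 H2]]; [lra|].
exists (Rmin d1 d2). split; [apply Rmin_pos; auto|]. intros s hs.
assert (h1 := H1 s (near_mono _ _ _ _ _ (Rmin_l d1 d2) hs)).
assert (h2 := H2 s (near_mono _ _ _ _ _ (Rmin_r d1 d2) hs)).
replace (f s + g s - (L + M)) with ((f s - L) + (g s - M)) by ring.
eapply Rle_lt_trans; [apply Rabs_triang|]. lra.
Qed.

Lemma lim_mult t side f g L M : lim_w t side f L -> lim_w t side g M ->
  lim_w t side (fun s => f s * g s) (L * M).
Proof.
intros Hf Hg eps he.
set (e1 := Rmin 1 (eps / (2 * (Rabs M + 1)))).
set (e2 := eps / (2 * (Rabs L + 1))).
pose proof (Rabs_pos M). pose proof (Rabs_pos L).
assert (he1 : 0 < e1).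
{ apply Rmin_pos; [lra|]. apply Rdiv_lt_0_compat; lra. }
assert (he2 : 0 < e2) by (apply Rdiv_lt_0_compat; lra).
destruct (Hf e1 he1) as [d1 [hd1 H1]].
destruct (Hg e2 he2) as [d2 [hd2 H2]].
exists (Rmin d1 d2). split; [apply Rmin_pos; auto|]. intros s hs.
assert (h1 := H1 s (near_mono _ _ _ _ _ (Rmin_l d1 d2) hs)).
assert (h2 := H2 s (near_mono _ _ _ _ _ (Rmin_r d1 d2) hs)).
replace (f s * g s - L * M) with (f s * (g s - M) + M * (f s - L)) by ring.
eapply Rle_lt_trans; [apply Rabs_triang|]. rewrite !Rabs_mult.
assert (hfs : Rabs (f s) <= Rabs L + 1).
{ replace (f s) with (L + (f s - L)) by ring.
  eapply Rle_trans; [apply Rabs_triang|].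
  assert (e1 <= 1) by apply Rmin_l. lra. }
assert (A1 : Rabs (f s) * Rabs (g s - M) <= (Rabs L + 1) * Rabs (g s - M)).
{ apply Rmult_le_compat_r; [apply Rabs_pos|lra]. }
assert (A1' : (Rabs L + 1) * Rabs (g s - M) < (Rabs L + 1) * e2).
{ apply Rmult_lt_compat_l; lra. }
assert (A2 : Rabs M * Rabs (f s - L) <= (Rabs M + 1) * e1).
{ apply Rmult_le_compat; try apply Rabs_pos; lra. }
assert (A3 : (Rabs L + 1) * e2 = eps / 2) by (unfold e2; field; lra).
assert (A4 : (Rabs M + 1) * e1 <= eps / 2).
{ assert (e1 <= eps / (2 * (Rabs M + 1))) by apply Rmin_r.
  replace (eps / 2) with ((Rabs M + 1) * (eps / (2 * (Rabs M + 1)))) by (field; lra).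
  apply Rmult_le_compat_l; lra. }
lra.
Qed.

Lemma lim_rsum t side n (f : nat -> R -> R) (L : nat -> R) :
  (forall i, (i < n)%nat -> lim_w t side (f i) (L i)) ->
  lim_w t side (fun s => rsum n (fun i => f i s)) (rsum n L).
Proof.
induction n; intros H; simpl.
- apply lim_const.
- apply (lim_plus t side (fun s => rsum n (fun i => f i s)) (f n)).
  + apply IHn; intros; apply H; lia.
  + apply H; lia.
Qed.

Lemma lim_quad t side n P (x : R -> vec) (v : vec) :
  (forall j, (j < n)%nat -> lim_w t side (fun s => x s j) (v j)) ->
  lim_w t side (fun s => quad n P (x s)) (quad n P v).
Proof.
intros H. unfold quad.
apply (lim_rsum t side n (fun i s => x s i * rsum n (fun j => P i j * x s j))).
intros i hi. apply (lim_mult t side (fun s => x s i)); [apply H; auto|].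
apply (lim_rsum t side n (fun j s => P i j * x s j)).
intros j hj. apply (lim_mult t side (fun _ => P i j)); [apply lim_const|apply H; auto].
Qed.

Lemma lim_cont t side f : continuity_pt f t -> lim_w t side f (f t).
Proof.
intros Hc eps he.
destruct (Hc eps he) as [d [hd H]].
exists d. split; auto. intros s hs.
destruct (Req_dec s t) as [->|hne].
- unfold Rminus. rewrite Rplus_opp_r, Rabs_R0. auto.
- apply H. split.
  + unfold D_x, no_cond. split; auto.
  + unfold R_dist. apply (near_abs t side d s hs).
Qed.

Lemma lim_le0 t side f L : lim_w t side f L ->
  (exists d0, 0 < d0 /\ forall s, near t side d0 s -> 0 <= f s) -> 0 <= L.
Proof.
intros Hf [d0 [hd0 H0]].
destruct (Rle_or_lt 0 L) as [h|h]; auto.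
destruct (Hf (- L)) as [d [hd H]]; [lra|].
destruct (near_ex t side (Rmin d d0)) as [s hs]; [apply Rmin_pos; auto|].
assert (h1 := H s (near_mono _ _ _ _ _ (Rmin_l d d0) hs)).
assert (h2 := H0 s (near_mono _ _ _ _ _ (Rmin_r d d0) hs)).
apply Rabs_def2 in h1. lra.
Qed.

Lemma lim_ext t side f g L : (exists d0, 0 < d0 /\ forall s, near t side d0 s -> f s = g s) ->
  lim_w t side f L -> lim_w t side g L.
Proof.
intros [d0 [hd0 H0]] Hf eps he.
destruct (Hf eps he) as [d [hd H]].
exists (Rmin d d0). split; [apply Rmin_pos; auto|]. intros s hs.
rewrite <- H0 by (exact (near_mono _ _ _ _ _ (Rmin_r d d0) hs)).
apply H. exact (near_mono _ _ _ _ _ (Rmin_l d d0) hs).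
Qed.

Lemma lim_le t side f g L M : lim_w t side f L -> lim_w t side g M ->
  (exists d0, 0 < d0 /\ forall s, near t side d0 s -> f s <= g s) -> L <= M.
Proof.
intros Hf Hg [d0 [hd0 H0]].
assert (Hm : lim_w t side (fun s => g s + (-1) * f s) (M + (-1) * L)).
{ apply lim_plus; auto. apply (lim_mult t side (fun _ => -1)); auto. apply lim_const. }
assert (0 <= M + (-1) * L).
{ apply (lim_le0 t side _ _ Hm). exists d0. split; auto. intros s hs.
  specialize (H0 s hs). lra. }
lra.
Qed.

Lemma lim_unique t side f L M : lim_w t side f L -> lim_w t side f M -> L = M.
Proof.
intros H1 H2.
assert (L <= M) by (apply (lim_le t side f f); auto; exists 1; split; [lra|]; intros; lra).
assert (M <= L) by (apply (lim_le t side f f); auto; exists 1; split; [lra|]; intros; lra).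
lra.
Qed.

Lemma right_lim_w n x t v : right_lim n x t v ->
  forall j, (j < n)%nat -> lim_w t true (fun s => x s j) (v j).
Proof. intros H j hj eps he. destruct (H j hj eps he) as [d [hd H']]. exists d. split; auto. Qed.

Lemma left_lim_w n x t v : left_lim n x t v ->
  forall j, (j < n)%nat -> lim_w t false (fun s => x s j) (v j).
Proof. intros H j hj eps he. destruct (H j hj eps he) as [d [hd H']]. exists d. split; auto. Qed.

Lemma quad_madd n A B v : quad n (madd A B) v = quad n A v + quad n B v.
Proof.
unfold quad, madd. rewrite <- rsum_plus. apply rsum_ext; intros i hi.
rewrite <- Rmult_plus_distr_l, <- rsum_plus. f_equal. apply rsum_ext; intros; ring.
Qed.

Lemma quad_msub n A B v : quad n (msub A B) v = quad n A v - quad n B v.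
Proof.
unfold quad, msub. rewrite <- rsum_minus. apply rsum_ext; intros i hi.
rewrite <- Rmult_minus_distr_l, <- rsum_minus. f_equal. apply rsum_ext; intros; ring.
Qed.

Lemma quad_gram_zero n m C v : (forall r, (r < m)%nat -> mulmv n C v r = 0) ->
  quad n (gram m C) v = 0.
Proof.
intros H.
rewrite quad_expand. unfold gram.
rewrite (rsum_ext n _ (fun i => rsum m (fun r => rsum n (fun j => v i * C r i * C r j * v j)))).
2:{ intros i hi. rewrite <- rsum_swap. apply rsum_ext; intros j hj.
    rewrite <- rsum_scal. rewrite Rmult_comm, <- rsum_scal. apply rsum_ext; intros; ring. }
rewrite rsum_swap. apply rsum_zero; intros r hr.
transitivity (mulmv n C v r * mulmv n C v r).
- unfold mulmv. rewrite <- rsum_scal. rewrite <- rsum_swap.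
  apply rsum_ext; intros i hi. rewrite Rmult_comm, <- rsum_scal.
  apply rsum_ext; intros; ring.
- rewrite H by auto. ring.
Qed.

Lemma deriv_rsum n (f : nat -> R -> R) (f' : nat -> R) t :
  (forall i, (i < n)%nat -> derivable_pt_lim (f i) t (f' i)) ->
  derivable_pt_lim (fun s => rsum n (fun i => f i s)) t (rsum n f').
Proof.
induction n; intros H; simpl.
- apply derivable_pt_lim_const.
- change (fun s => rsum n (fun i => f i s) + f n s) with
    (plus_fct (fun s => rsum n (fun i => f i s)) (f n)).
  apply derivable_pt_lim_plus; [apply IHn; intros; apply H; lia|apply H; lia].
Qed.

Lemma deriv_quad n P (x : R -> vec) (dx : vec) t :
  (forall j, (j < n)%nat -> derivable_pt_lim (fun s => x s j) t (dx j)) ->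
  derivable_pt_lim (fun s => quad n P (x s)) t (bil n P dx (x t) + bil n P (x t) dx).
Proof.
intros H. unfold bil. rewrite <- rsum_plus. unfold quad.
apply (deriv_rsum n (fun i s => x s i * rsum n (fun j => P i j * x s j))).
intros i hi.
change (fun s => x s i * rsum n (fun j => P i j * x s j)) with
  (mult_fct (fun s => x s i) (fun s => rsum n (fun j => P i j * x s j))).
apply derivable_pt_lim_mult; [apply H; auto|].
apply (deriv_rsum n (fun j s => P i j * x s j)).
intros j hj. change (fun s => P i j * x s j) with (mult_real_fct (P i j) (fun s => x s j)).
apply derivable_pt_lim_scal. apply H; auto.
Qed.

Lemma deriv_loc0 (f : R -> R) a b t l :
  (forall s, a < s -> s < b -> f s = 0) -> a < t -> t < b ->
  derivable_pt_lim f t l -> l = 0.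
Proof.
intros H ha hb hd.
apply (uniqueness_limite f t); auto.
intros eps heps.
assert (hd0 : 0 < Rmin (t - a) (b - t)) by (apply Rmin_pos; lra).
exists (mkposreal _ hd0); intros h hh hlt; simpl in hlt.
pose proof (Rmin_l (t - a) (b - t)).
pose proof (Rmin_r (t - a) (b - t)).
destruct (Rabs_def2 _ _ hlt) as [hl hr].
rewrite (H (t+h)) by lra. rewrite (H t) by lra.
unfold Rdiv. replace ((0 - 0) * / h - 0) with 0 by ring.
rewrite Rabs_R0; lra.
Qed.

Module MC.
From mathcomp Require Import all_boot all_order all_algebra.
From mathcomp Require Import Rstruct.
Set Implicit Arguments. Unset Strict Implicit. Unset Printing Implicit Defensive.
Import GRing.Theory.
Local Open Scope ring_scope.

Lemma trmx_expn (F : fieldType) n (A : 'M[F]_n) j : (A ^+ j)^T = (A^T) ^+ j.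
Proof.
elim: j => [|j IH]; first by rewrite !expr0 trmx1.
by rewrite exprSr exprS -mulmxE trmx_mul IH mulmxE.
Qed.

Lemma LA (F : fieldType) n (A : 'M[F]_n) k :
 (forall v : 'cV_n, (exists y, v = A^+k *m y) -> exists y, v = A^+k.+1 *m y) ->
 (exists D : 'M_n, A^+k = A^+(k+k) *m D) /\
 (forall a : 'cV_n, A^+(k+k) *m a = 0 -> A^+k *m a = 0).
Proof.
move=> H.
set T := A^T.
have sub1 : (T^+k <= T^+k.+1)%MS.
  apply/row_subP => i.
  have [y Hy] : exists y, col i (A^+k) = A^+k.+1 *m y.
    by apply: H; exists (delta_mx i 0); rewrite colE.
  rewrite /T -trmx_expn -tr_col Hy trmx_mul trmx_expn.
  exact: submxMl.
have subj : forall j, (T^+k <= T^+(k+j))%MS.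
  elim=> [|j IH]; first by rewrite addn0.
  apply: (submx_trans IH).
  rewrite addnS exprD -addSn exprD -!mulmxE.
  exact: submxMr.
have sub3 := subj k.
split.
  have [D HD] := submxP sub3.
  exists D^T.
  apply: trmx_inj.
  by rewrite trmx_mul trmxK !trmx_expn.
have sub4 : (T^+(k+k) <= T^+k)%MS.
  by rewrite exprD -mulmxE submxMl.
have rk : \rank (T^+(k+k)) = \rank (T^+k).
  by apply/eqP; rewrite eqn_leq !mxrankS.
have kk : (kermx (T^+k) <= kermx (T^+(k+k)))%MS.
  apply/sub_kermxP.
  by rewrite exprD -mulmxE mulmxA mulmx_ker mul0mx.
have kk2 : (kermx (T^+(k+k)) <= kermx (T^+k))%MS.
  have := mxrank_leqif_sup kk.
  by rewrite !mxrank_ker rk => -[_ <-].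
move=> a Ha.
apply: trmx_inj.
rewrite trmx_mul trmx_expn trmx0.
apply/sub_kermxP.
apply: (submx_trans _ kk2).
apply/sub_kermxP.
by rewrite -trmx_expn -trmx_mul Ha trmx0.
Qed.

Lemma deriv_big (I : Type) (r : seq I) (f : I -> R -> R) (f' : I -> R) t :
  (forall i, derivable_pt_lim (f i) t (f' i)) ->
  derivable_pt_lim (fun s => \sum_(i <- r) f i s) t (\sum_(i <- r) f' i).
Proof.
move=> H; elim: r => [|x r IH].
  rewrite big_nil.
  have -> : (fun s => \sum_(i <- [::]) f i s) = fct_cte 0.
    by apply: functional_extensionality => s; rewrite big_nil.
  exact: derivable_pt_lim_const.
rewrite big_cons.
have -> : (fun s => \sum_(i <- x :: r) f i s) = plus_fct (f x) (fun s => \sum_(i <- r) f i s).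
  by apply: functional_extensionality => s; rewrite big_cons.
exact: derivable_pt_lim_plus.
Qed.

Lemma deriv_mx n p (K : 'M[R]_(p,n)) (X : R -> 'cV[R]_n) (DX : 'cV_n) t :
 (forall j, derivable_pt_lim (fun s => X s j 0) t (DX j 0)) ->
 forall i, derivable_pt_lim (fun s => (K *m X s) i 0) t ((K *m DX) i 0).
Proof.
move=> H i.
have -> : (fun s => (K *m X s) i 0) = (fun s => \sum_j (K i j * X s j 0)).
  by apply: functional_extensionality => s; rewrite mxE.
rewrite mxE; apply: deriv_big => j.
have -> : (fun s => K i j * X s j 0) = mult_real_fct (K i j) (fun s => X s j 0) by [].
exact: derivable_pt_lim_scal.
Qed.

Lemma nil_arg n (A : 'M[R]_n) k (D : 'M_n) (a b : R) (X : R -> 'cV[R]_n) :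
 A^+k = A^+(k+k) *m D ->
 (forall u : 'cV_n, A^+(k+k) *m u = 0 -> A^+k *m u = 0) ->
 (forall s, Rlt a s -> Rlt s b -> exists DX : 'cV_n,
    (forall j, derivable_pt_lim (fun s => X s j 0) s (DX j 0)) /\ X s = A *m DX) ->
 forall s, Rlt a s -> Rlt s b -> X s = A^+k *m (D *m X s).
Proof.
move=> HD Hker Hsol.
have powM : forall i j, A^+i *m A^+j = A^+(i+j) by move=> i j; rewrite mulmxE exprD.
have comm : forall j, A^+j *m A = A *m A^+j.
  by move=> j; rewrite !mulmxE -exprSr exprS.
set Pi := A^+k *m D.
have APi : A^+k *m Pi = A^+k by rewrite /Pi mulmxA powM -HD.
set Z := fun s => (1%:M - Pi) *m X s.
have HZ : forall s, Rlt a s -> Rlt s b -> exists DZ : 'cV_n,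
   (forall j, derivable_pt_lim (fun s => Z s j 0) s (DZ j 0)) /\ Z s = A *m DZ.
  move=> s ha hb.
  have [DX [HdX HX]] := Hsol s ha hb.
  exists ((1%:M - Pi) *m DX); split.
    by move=> j; apply: deriv_mx.
  have Hw : Pi *m X s = A *m (Pi *m DX).
    apply/eqP; rewrite -subr_eq0; apply/eqP.
    have -> : Pi *m X s - A *m (Pi *m DX) = A^+k *m (D *m X s - A *m (D *m DX)).
      by rewrite mulmxBr /Pi !mulmxA mulmxE -exprSr exprS -mulmxE.
    apply: Hker.
    rewrite mulmxBr (mulmxA (A^+(k+k)) D (X s)) -HD (mulmxA (A^+(k+k)) A) comm -mulmxA.
    rewrite [A^+(k+k) *m (D *m DX)]mulmxA -HD mulmxA -comm -mulmxA -HX.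
    by rewrite subrr.
  by rewrite /Z !mulmxBl !mul1mx Hw {1}HX mulmxBr.
have Z0 : forall d, (d <= k)%N -> forall s, Rlt a s -> Rlt s b -> A^+(k - d) *m Z s = 0.
  elim=> [_ s ha hb|d IH hd s ha hb].
    by rewrite subn0 /Z mulmxA mulmxBr mulmx1 APi subrr mul0mx.
  have [DZ [HdZ HZs]] := HZ s ha hb.
  have e : (k - d = (k - d.+1).+1)%N by rewrite subnS prednK // subn_gt0.
  have H0 : A^+(k - d) *m DZ = 0.
    apply/matrixP => i j; rewrite (ord1 j) [RHS]mxE.
    apply: (deriv_loc0 (fun s => (A^+(k-d) *m Z s) i 0) a b s) => //.
      by move=> s' ha' hb'; rewrite IH ?mxE // ltnW.
    exact: deriv_mx.
  by rewrite HZs mulmxA mulmxE -exprSr -e H0.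
move=> s ha hb.
have := Z0 k (leqnn k) s ha hb.
rewrite subnn expr0 mul1mx /Z mulmxBl mul1mx => /eqP; rewrite subr_eq0 => /eqP.
by rewrite /Pi -mulmxA.
Qed.

Definition mxf n (M : mat) : 'M[R]_n := \matrix_(i < n, j < n) M i j.
Definition cvf n (v : vec) : 'cV[R]_n := \col_(i < n) v i.
Definition rawv n (y : 'cV[R]_n) : vec := fun j => oapp (fun i : 'I_n => y i 0) 0 (insub j).

Lemma rsum_big n f : rsum n f = \sum_(i < n) f i.
Proof.
elim: n => [|n IH]; first by rewrite big_ord0.
by rewrite big_ord_recr /= IH.
Qed.

Lemma mxf_mul n A B : mxf n (mulmm n A B) = mxf n A *m mxf n B.
Proof.
apply/matrixP => i j; rewrite !mxE /mulmm rsum_big.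
by apply: eq_bigr => l _; rewrite !mxE.
Qed.

Lemma cvf_mul n A v : cvf n (mulmv n A v) = mxf n A *m cvf n v.
Proof.
apply/matrixP => i j; rewrite !mxE /mulmv rsum_big.
by apply: eq_bigr => l _; rewrite !mxE.
Qed.

Lemma mxf_idm n : mxf n idm = 1%:M.
Proof.
apply/matrixP => i j; rewrite !mxE /idm.
case: (eqVneq i j) => [->|hij]; first by rewrite Nat.eqb_refl.
case: (Nat.eqb_spec i j) => // e.
by case/eqP: hij; apply: val_inj.
Qed.

Lemma mxf_pow n M k : mxf n (mpow n M k) = (mxf n M)^+k.
Proof.
elim: k => [|k IH]; first by rewrite expr0 mxf_idm.
by rewrite exprS /mpow /= -/(mpow n M k) mxf_mul IH mulmxE.
Qed.

Lemma cvf_rawv n (y : 'cV[R]_n) : cvf n (rawv y) = y.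
Proof.
apply/matrixP => i j; rewrite (ord1 j) !mxE /rawv.
by rewrite valK.
Qed.

Lemma cvf_eq n v w : (forall j, lt j n -> v j = w j) <-> cvf n v = cvf n w.
Proof.
split.
  by move=> H; apply/matrixP => i j; rewrite !mxE H //; apply/ltP.
move=> H j hj.
have := congr1 (fun A : 'cV[R]_n => A (Ordinal (introT ltP hj)) 0) H.
by rewrite !mxE.
Qed.

Lemma inIm_mx n K v : inIm n K v <-> exists y : 'cV_n, cvf n v = mxf n K *m y.
Proof.
split.
  move=> [y Hy]; exists (cvf n y); rewrite -cvf_mul; exact/cvf_eq.
move=> [y Hy]; exists (rawv y); apply/cvf_eq.
by rewrite cvf_mul cvf_rawv.
Qed.

Lemma key n (M : mat) k a b (x : R -> vec) :
  im_stable n M k ->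
  (forall s, Rlt a s -> Rlt s b -> exists dx : vec,
     (forall j, lt j n -> derivable_pt_lim (fun s => x s j) s (dx j)) /\
     (forall j, lt j n -> x s j = mulmv n M dx j)) ->
  forall s, Rlt a s -> Rlt s b -> inIm n (mpow n M k) (x s).
Proof.
move=> Hst Hsol.
set A := mxf n M.
have Hla : forall v : 'cV_n, (exists y, v = A^+k *m y) -> exists y, v = A^+k.+1 *m y.
  move=> v [y Hy].
  have : inIm n (mpow n M k) (rawv v).
    by apply/inIm_mx; exists y; rewrite cvf_rawv mxf_pow.
  move/Hst/inIm_mx => [y' Hy']; exists y'.
  by rewrite -(cvf_rawv v) Hy' mxf_pow.
have [[D HD] Hker] := LA Hla.
move=> s ha hb.
have := nil_arg (X := fun s => cvf n (x s)) HD Hker _ ha hb.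
move=> H; apply/inIm_mx; exists (D *m cvf n (x s)); rewrite mxf_pow; apply: H.
move=> s' ha' hb'.
have [dx [Hd Hx]] := Hsol s' ha' hb'.
exists (cvf n dx); split.
  move=> j; rewrite mxE.
  have -> : (fun s => cvf n (x s) j 0) = (fun s => x s j).
    by apply: functional_extensionality => t; rewrite mxE.
  by apply: Hd; apply/ltP.
by rewrite -cvf_mul; apply/cvf_eq.
Qed.

Lemma bil_mx n P u w : bil n P u w = ((cvf n u)^T *m mxf n P *m cvf n w) 0 0.
Proof.
rewrite /bil rsum_big !mxE.
under eq_bigr => i _ do rewrite rsum_big RmultE mulr_sumr.
rewrite exchange_big /=; apply: eq_bigr => j _.
rewrite !mxE mulr_suml; apply: eq_bigr => i _.
by rewrite !mxE mulrA.
Qed.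

Lemma nsq_mx n w : nsq n w = ((cvf n w)^T *m cvf n w) 0 0.
Proof.
rewrite /nsq rsum_big !mxE; apply: eq_bigr => j _.
by rewrite !mxE RpowE expr2.
Qed.

Lemma mxf_tr n M : mxf n (tr M) = (mxf n M)^T.
Proof. by apply/matrixP => i j; rewrite !mxE. Qed.

Lemma mxf_madd n A B : mxf n (madd A B) = mxf n A + mxf n B.
Proof. by apply/matrixP => i j; rewrite !mxE. Qed.

Lemma solve_x n A Ainv E (x dx : vec) : is_inverse n A Ainv ->
  (forall j, lt j n -> mulmv n E dx j = mulmv n A x j) ->
  forall j, lt j n -> x j = mulmv n (mulmm n Ainv E) dx j.
Proof.
move=> Hinv H; apply/cvf_eq.
have HI : mxf n (mulmm n Ainv A) = 1%:M.
  apply/matrixP => i j; rewrite -mxf_idm !mxE.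
  by case: (Hinv i j (elimT ltP (ltn_ord i)) (elimT ltP (ltn_ord j))).
rewrite cvf_mul mxf_mul -mulmxA -cvf_mul.
have -> : cvf n (mulmv n E dx) = cvf n (mulmv n A x) by apply/cvf_eq.
by rewrite cvf_mul mulmxA -mxf_mul HI mul1mx.
Qed.

Lemma deriv_ident n P M (x dx : vec) : (forall j, lt j n -> x j = mulmv n M dx j) ->
  bil n P dx x + bil n P x dx = quad n (madd (mulmm n P M) (mulmm n (tr M) P)) dx.
Proof.
move/cvf_eq; rewrite cvf_mul => Hx.
rewrite /quad -/(bil n _ dx dx) !bil_mx Hx mxf_madd !mxf_mul mxf_tr.
by rewrite trmx_mul mulmxDr mulmxDl [in RHS]mxE !mulmxA.
Qed.

Lemma nsq_mulmv n M v : nsq n (mulmv n M v) = quad n (mulmm n (tr M) M) v.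
Proof.
rewrite /quad -/(bil n _ v v) nsq_mx bil_mx cvf_mul mxf_mul mxf_tr.
by rewrite trmx_mul !mulmxA.
Qed.
End MC.
Lemma unif_lower N (Pr : nat -> R -> Prop) :
  (forall i c c', 0 < c' <= c -> Pr i c -> Pr i c') ->
  (forall i, (1 <= i <= N)%nat -> exists c, 0 < c /\ Pr i c) ->
  exists c, 0 < c /\ forall i, (1 <= i <= N)%nat -> Pr i c.
Proof.
intros Hm. induction N; intros H.
- exists 1. split; [lra|]. intros; lia.
- destruct IHN as [c [hc Hc]]; [intros; apply H; lia|].
  destruct (H (S N)) as [c' [hc' Hc']]; [lia|].
  exists (Rmin c c'). split; [apply Rmin_pos; auto|].
  intros i hi. destruct (Nat.eq_dec i (S N)) as [->|hne].
  + apply (Hm _ c'); auto. split; [apply Rmin_pos; auto|apply Rmin_r].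
  + apply (Hm _ c); [split; [apply Rmin_pos; auto|apply Rmin_l]|]. apply Hc; lia.
Qed.

Lemma unif_upper N (Pr : nat -> R -> Prop) :
  (forall i c c', c <= c' -> Pr i c -> Pr i c') ->
  (forall i, (1 <= i <= N)%nat -> exists c, 0 < c /\ Pr i c) ->
  exists c, 0 < c /\ forall i, (1 <= i <= N)%nat -> Pr i c.
Proof.
intros Hm. induction N; intros H.
- exists 1. split; [lra|]. intros; lia.
- destruct IHN as [c [hc Hc]]; [intros; apply H; lia|].
  destruct (H (S N)) as [c' [hc' Hc']]; [lia|].
  exists (Rmax c c'). split; [eapply Rlt_le_trans; [exact hc|apply Rmax_l]|].
  intros i hi. destruct (Nat.eq_dec i (S N)) as [->|hne].
  + apply (Hm _ c'); auto. apply Rmax_r.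
  + apply (Hm _ c); [apply Rmax_l|]. apply Hc; lia.
Qed.

Definition mneg (Q : mat) : mat := fun i j => - Q i j.

Lemma quad_mneg n Q v : quad n (mneg Q) v = - quad n Q v.
Proof.
unfold quad, mneg.
replace (- rsum n (fun i => v i * rsum n (fun j => Q i j * v j))) with
  ((-1) * rsum n (fun i => v i * rsum n (fun j => Q i j * v j))) by ring.
rewrite <- rsum_scal. apply rsum_ext; intros i hi.
rewrite (rsum_ext n (fun j => - Q i j * v j) (fun j => (-1) * (Q i j * v j))) by (intros; ring).
rewrite rsum_scal. ring.
Qed.

Lemma deriv_expa al t0 s :
  derivable_pt_lim (fun s => exp (al * (s - t0))) s (al * exp (al * (s - t0))).
Proof.
change (fun s => exp (al * (s - t0))) with (comp exp (fun s => al * (s - t0))).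
rewrite Rmult_comm.
apply derivable_pt_lim_comp; [|apply derivable_pt_lim_exp].
assert (H : derivable_pt_lim (mult_real_fct al (minus_fct id (fct_cte t0))) s (al * (1 - 0))).
{ apply derivable_pt_lim_scal.
  apply derivable_pt_lim_minus; [apply derivable_pt_lim_id|apply derivable_pt_lim_const]. }
replace (al * (1 - 0)) with al in H by ring. exact H.
Qed.

Lemma mono_interval n P (x : R -> vec) (W : R -> R) al t0 a b v :
  (forall s, W s = exp (al * (s - t0)) * quad n P (x s)) ->
  a < b ->
  (forall s, a < s < b -> exists w, derivable_pt_lim W s w /\ w <= 0) ->
  right_lim n x a (x a) ->
  left_lim n x b v ->
  quad n P (x b) <= quad n P v ->
  W b <= W a.
Proof.
intros HW hab Hd Hr Hl Hjump.
assert (S1 : forall s1 s2, a < s1 -> s1 < s2 -> s2 < b -> W s2 <= W s1).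
{ intros s1 s2 h1 h2 h3.
  set (f' := fun c => epsilon (inhabits 0) (fun w => derivable_pt_lim W c w /\ w <= 0)).
  assert (Hf' : forall c, a < c < b -> derivable_pt_lim W c (f' c) /\ f' c <= 0).
  { intros c hc. unfold f'. apply epsilon_spec. apply Hd; auto. }
  destruct (MVT_cor2 W f' s1 s2 h2) as [c [Hc1 Hc2]].
  { intros c hc. apply Hf'. lra. }
  destruct (Hf' c) as [_ hle]; [lra|].
  assert (f' c * (s2 - s1) <= 0) by (assert (0 < s2 - s1) by lra; nra). lra. }
assert (Lexp : forall t side, lim_w t side (fun s => exp (al * (s - t0))) (exp (al * (t - t0)))).
{ intros t side. apply (lim_cont t side (fun s => exp (al * (s - t0)))).
  apply derivable_continuous_pt. exists (al * exp (al * (t - t0))). apply deriv_expa. }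
assert (LWa : lim_w a true W (W a)).
{ apply (lim_ext a true (fun s => exp (al * (s - t0)) * quad n P (x s))).
  { exists 1. split; [lra|]. intros; auto. }
  rewrite HW. apply lim_mult; [apply Lexp|]. apply lim_quad. apply right_lim_w; auto. }
assert (S2 : forall s, a < s < b -> W s <= W a).
{ intros s hs.
  apply (lim_le a true (fun _ => W s) W); [apply lim_const|exact LWa|].
  exists (s - a). split; [lra|]. intros s' hs'. unfold near in hs'.
  destruct (Req_dec s' s) as [->|hne]; [lra|]. apply S1; lra. }
assert (LWb : lim_w b false W (exp (al * (b - t0)) * quad n P v)).
{ apply (lim_ext b false (fun s => exp (al * (s - t0)) * quad n P (x s))).
  { exists 1. split; [lra|]. intros; auto. }
  apply lim_mult; [apply Lexp|]. apply lim_quad. apply left_lim_w; auto. }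
assert (exp (al * (b - t0)) * quad n P v <= W a).
{ apply (lim_le b false W (fun _ => W a)); [exact LWb|apply lim_const|].
  exists (b - a). split; [lra|]. intros s hs. unfold near in hs. apply S2. lra. }
rewrite HW.
pose proof (exp_pos (al * (b - t0))).
assert (exp (al * (b - t0)) * quad n P (x b) <= exp (al * (b - t0)) * quad n P v)
  by (apply Rmult_le_compat_l; lra).
lra.
Qed.

Lemma deriv_mulmv n K (x : R -> vec) dx s r :
  (forall j, (j < n)%nat -> derivable_pt_lim (fun s => x s j) s (dx j)) ->
  derivable_pt_lim (fun s => mulmv n K (x s) r) s (mulmv n K dx r).
Proof.
intros H. unfold mulmv.
apply (deriv_rsum n (fun k s => K r k * x s k)).
intros k hk. change (fun s => K r k * x s k) with (mult_real_fct (K r k) (fun s => x s k)).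
apply derivable_pt_lim_scal. apply H; auto.
Qed.

Lemma cons_deriv n Cm mC (x : R -> vec) a b s dx :
  a < s < b ->
  (forall s', a < s' < b -> forall r, (r < mC)%nat -> mulmv n Cm (x s') r = 0) ->
  (forall j, (j < n)%nat -> derivable_pt_lim (fun s => x s j) s (dx j)) ->
  forall r, (r < mC)%nat -> mulmv n Cm dx r = 0.
Proof.
intros hs H Hd r hr.
apply (deriv_loc0 (fun s => mulmv n Cm (x s) r) a b s); try lra.
- intros s' h1 h2. apply H; auto.
- apply deriv_mulmv; auto.
Qed.

Lemma deriv_W n P M Cm mC (x : R -> vec) dx s t0 al c2 KP KM :
  0 < c2 -> 0 < KP -> 0 < KM -> al = c2 / (KP * KM) ->
  (forall j, (j < n)%nat -> derivable_pt_lim (fun s => x s j) s (dx j)) ->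
  (forall j, (j < n)%nat -> x s j = mulmv n M dx j) ->
  (forall r, (r < mC)%nat -> mulmv n Cm dx r = 0) ->
  (forall v, quad n (msub (madd (mulmm n P M) (mulmm n (tr M) P)) (gram mC Cm)) v <= - c2 * nsq n v) ->
  (forall v, quad n P v <= KP * nsq n v) ->
  (forall v, nsq n (mulmv n M v) <= KM * nsq n v) ->
  exists w, derivable_pt_lim (fun s => exp (al * (s - t0)) * quad n P (x s)) s w /\ w <= 0.
Proof.
intros hc2 hKP hKM hal Hd Hx HC HL HP HM.
set (e := exp (al * (s - t0))).
set (Vd := bil n P dx (x s) + bil n P (x s) dx).
exists (al * e * quad n P (x s) + e * Vd). split.
- change (fun s => exp (al * (s - t0)) * quad n P (x s)) with
    (mult_fct (fun s => exp (al * (s - t0))) (fun s => quad n P (x s))).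
  apply derivable_pt_lim_mult; [apply deriv_expa|apply deriv_quad; auto].
- assert (HVd : Vd <= - c2 * nsq n dx).
  { assert (E : Vd = quad n (madd (mulmm n P M) (mulmm n (tr M) P)) dx) by exact (@MC.deriv_ident n P M (x s) dx Hx).
    rewrite E.
    pose proof (HL dx) as h. rewrite quad_msub, (quad_gram_zero n mC Cm dx HC) in h. lra. }
  assert (HV : quad n P (x s) <= KP * KM * nsq n dx).
  { rewrite (quad_ext n P (x s) (mulmv n M dx) Hx).
    eapply Rle_trans; [apply HP|]. rewrite Rmult_assoc. apply Rmult_le_compat_l; [lra|apply HM]. }
  assert (al * quad n P (x s) <= c2 * nsq n dx).
  { rewrite hal. unfold Rdiv.
    replace (c2 * nsq n dx) with (c2 * / (KP * KM) * (KP * KM * nsq n dx)) by (field; lra).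
    apply Rmult_le_compat_l; [|exact HV].
    apply Rmult_le_pos; [lra|]. left. apply Rinv_0_lt_compat. nra. }
  pose proof (exp_pos (al * (s - t0))). fold e in H0.
  replace (al * e * quad n P (x s) + e * Vd) with (e * (al * quad n P (x s) + Vd)) by ring.
  assert (al * quad n P (x s) + Vd <= 0) by lra. nra.
Qed.

Lemma free_interval (l : list R) t : exists d, 0 < d /\ d <= 1 /\ forall p, List.In p l -> ~ (t < p < t + d).
Proof.
induction l as [|p l IH].
- exists 1. split; [lra|split; [lra|]]. intros p [].
- destruct IH as [d [hd [hd1 H]]].
  destruct (Rlt_or_le t p) as [hp|hp].
  + exists (Rmin d (p - t)). split; [apply Rmin_pos; lra|].
    split; [pose proof (Rmin_l d (p - t)); lra|].
    intros q [<-|hq].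
    * pose proof (Rmin_r d (p - t)). lra.
    * intros hc. apply (H q hq). pose proof (Rmin_l d (p - t)). lra.
  + exists d. split; [lra|split; [lra|]]. intros q [<-|hq]; [lra|]. apply H; auto.
Qed.

Lemma lim_mulmv t side n K (x : R -> vec) v r :
  (forall j, (j < n)%nat -> lim_w t side (fun s => x s j) (v j)) ->
  lim_w t side (fun s => mulmv n K (x s) r) (mulmv n K v r).
Proof.
intros H. unfold mulmv.
apply (lim_rsum t side n (fun k s => K r k * x s k)).
intros k hk. apply (lim_mult t side (fun _ => K r k)); [apply lim_const|apply H; auto].
Qed.

Lemma mulmv_zero n K r : mulmv n K (fun _ => 0) r = 0.
Proof. unfold mulmv. apply rsum_zero. intros; ring. Qed.

Theorem corollary1 (n N : nat) (E A Ainv : nat -> mat) (m : nat -> nat)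
    (C : nat -> mat) (P : mat) :
  (forall i, (1 <= i <= N)%nat -> is_inverse n (A i) (Ainv i)) ->
  (forall i, (1 <= i <= N)%nat -> forall v : vec,
     in_cons n (mulmm n (Ainv i) (E i)) v <->
     (forall r, (r < m i)%nat -> mulmv n (C i) v r = 0)) ->
  symmetric n P ->
  (forall i, (1 <= i <= N)%nat -> posdef n (madd P (gram (m i) (C i)))) ->
  (forall i, (1 <= i <= N)%nat ->
     negdef n (msub (madd (mulmm n P (mulmm n (Ainv i) (E i)))
                          (mulmm n (tr (mulmm n (Ainv i) (E i))) P))
                    (gram (m i) (C i)))) ->
  exists beta alpha, 0 < beta /\ 0 < alpha /\
    forall (t0 : R) (sigma : R -> nat) (x : R -> vec),
      is_solution n N E A t0 sigma x ->
      jump_nonincreasing n P t0 sigma x ->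
      forall t, t0 <= t ->
        euclid_norm n (x t) <= beta * exp (- alpha * (t - t0)) * euclid_norm n (x t0).
Proof.
intros HAinv Hcons Hsym Hpd Hnd.
set (Mi := fun i => mulmm n (Ainv i) (E i)).
set (Li := fun i => msub (madd (mulmm n P (Mi i)) (mulmm n (tr (Mi i)) P)) (gram (m i) (C i))).
destruct (unif_lower N (fun i c => forall v, (forall r, (r < m i)%nat -> mulmv n (C i) v r = 0) ->
            c * nsq n v <= quad n P v)) as [c1 [hc1 Hc1]].
{ intros i c c' hc H v hv. specialize (H v hv). pose proof (nsq_nonneg n v). nra. }
{ intros i hi. destruct (quad_lower n _ (Hpd i hi)) as [c [hc H]].
  exists c. split; auto. intros v hv. specialize (H v).
  rewrite quad_madd, (quad_gram_zero n (m i) (C i) v hv) in H. lra. }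
destruct (unif_lower N (fun i c => forall v, quad n (Li i) v <= - c * nsq n v)) as [c2 [hc2 Hc2]].
{ intros i c c' hc H v. specialize (H v). pose proof (nsq_nonneg n v). nra. }
{ intros i hi.
  assert (Hp : posdef n (mneg (Li i))).
  { intros v hv. rewrite quad_mneg. specialize (Hnd i hi v hv). unfold Li, Mi. lra. }
  destruct (quad_lower n _ Hp) as [c [hc H]].
  exists c. split; auto. intros v. specialize (H v). rewrite quad_mneg in H. lra. }
destruct (unif_upper N (fun i K => forall v, nsq n (mulmv n (Mi i) v) <= K * nsq n v)) as [KM [hKM HKM]].
{ intros i c c' hc H v. specialize (H v). pose proof (nsq_nonneg n v). nra. }
{ intros i hi. destruct (quad_upper n (mulmm n (tr (Mi i)) (Mi i))) as [K [hK H]].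
  exists K. split; auto. intros v. rewrite MC.nsq_mulmv. apply H. }
destruct (quad_upper n P) as [KP [hKP HKP]].
set (al := c2 / (KP * KM)).
assert (hal : 0 < al) by (unfold al; apply Rdiv_lt_0_compat; [lra|nra]).
exists (sqrt (KP / c1)), (al / 2).
split; [apply sqrt_lt_R0; apply Rdiv_lt_0_compat; lra|].
split; [lra|].
intros t0 sigma x Hsol Hjump t ht.
destruct Hsol as [[Hrange Hfin] [Hode [Hleft Hright]]].
set (W := fun s => exp (al * (s - t0)) * quad n P (x s)).
assert (Cint : forall a b, t0 <= a -> a < b ->
   (forall s u, a < s < b -> a < u < b -> sigma s = sigma u) ->
   exists i, (1 <= i <= N)%nat /\
     (forall s, a < s < b -> exists dx : vec,
        (forall j, (j < n)%nat -> derivable_pt_lim (fun s => x s j) s (dx j)) /\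
        (forall j, (j < n)%nat -> x s j = mulmv n (Mi i) dx j)) /\
     (forall s, a < s < b -> forall r, (r < m i)%nat -> mulmv n (C i) (x s) r = 0)).
{ intros a b ha hab Hc.
  set (i := sigma ((a + b) / 2)).
  assert (hi : (1 <= i <= N)%nat) by (apply Hrange; lra).
  assert (Hdx : forall s, a < s < b -> exists dx : vec,
        (forall j, (j < n)%nat -> derivable_pt_lim (fun s => x s j) s (dx j)) /\
        (forall j, (j < n)%nat -> x s j = mulmv n (Mi i) dx j)).
  { intros s hs.
    assert (Hsc : sigma_cont sigma s).
    { exists (Rmin (s - a) (b - s)). split; [apply Rmin_pos; lra|].
      intros s' hs'. apply Rabs_def2 in hs'.
      pose proof (Rmin_l (s - a) (b - s)). pose proof (Rmin_r (s - a) (b - s)).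
      apply Hc; lra. }
    destruct (Hode s ltac:(lra) Hsc) as [dx [Hd He]].
    assert (hsi : sigma s = i) by (apply Hc; lra).
    rewrite hsi in He.
    exists dx. split; auto.
    apply (MC.solve_x (HAinv i hi) He). }
  exists i. split; auto. split; auto.
  destruct (proj2 (Hcons i hi (fun _ => 0))) as [k [Hk _]].
  { intros r hr. apply mulmv_zero. }
  intros s hs r hr.
  apply (proj1 (Hcons i hi (x s))); auto.
  exists k. split; auto.
  apply (MC.key (proj1 Hk) (fun s h1 h2 => Hdx s (conj h1 h2))); lra. }
assert (Dec : forall a b, t0 <= a -> a < b ->
   (forall s u, a < s < b -> a < u < b -> sigma s = sigma u) -> W b <= W a).
{ intros a b ha hab Hc.
  destruct (Cint a b ha hab Hc) as [i [hi [Hdx HCx]]].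
  destruct (Hleft b ltac:(lra)) as [v Hv].
  apply (mono_interval n P x W al t0 a b v); [intros; reflexivity|exact hab| | |exact Hv|].
  - intros s hs. destruct (Hdx s hs) as [dx [Hd Hx]].
    apply (deriv_W n P (Mi i) (C i) (m i) x dx s t0 al c2 KP KM hc2 hKP hKM eq_refl Hd Hx).
    + apply (cons_deriv n (C i) (m i) x a b s dx); auto.
    + apply (Hc2 i hi).
    + apply HKP.
    + apply (HKM i hi).
  - apply Hright; lra.
  - destruct (classic (sigma_cont sigma b)) as [hc|hc].
    + destruct (Hode b ltac:(lra) hc) as [dx [Hd _]].
      right. apply quad_ext. intros j hj.
      apply (lim_unique b false (fun s => x s j)).
      * apply lim_cont. apply derivable_continuous_pt. exists (dx j). apply Hd; auto.
      * apply left_lim_w with n; auto.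
    + apply (Hjump b ltac:(lra) hc v Hv). }
assert (Chain : forall l a b, t0 <= a -> a <= b ->
   (forall s u, a < s < b -> a < u < b ->
      (forall q, List.In q l -> ~ (Rmin s u <= q <= Rmax s u)) -> sigma s = sigma u) ->
   W b <= W a).
{ induction l as [|p l IH]; intros a b ha hab H.
  - destruct (Req_dec a b) as [->|hne]; [lra|].
    apply Dec; try lra. intros s u hs hu. apply H; try lra; intros q [].
  - destruct (classic (a < p < b)) as [hp|hp].
    + apply Rle_trans with (W p).
      * apply IH; try lra. intros s u hs hu Hl. apply H; try lra.
        intros q [<-|hq].
        -- unfold Rmin, Rmax. destruct (Rle_dec s u); lra.
        -- apply Hl; auto.
      * apply IH; try lra. intros s u hs hu Hl. apply H; try lra.
        intros q [<-|hq].
        -- unfold Rmin, Rmax. destruct (Rle_dec s u); lra.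
        -- apply Hl; auto.
    + apply IH; auto. intros s u hs hu Hl. apply H; auto.
      intros q [<-|hq].
      * unfold Rmin, Rmax. destruct (Rle_dec s u); lra.
      * apply Hl; auto. }
assert (HWt : W t <= W t0).
{ destruct (Hfin t0 t) as [l Hl].
  apply (Chain l); try lra.
  intros s u hs hu Hp. apply Hl; auto; lra. }
assert (Hlow : c1 * nsq n (x t) <= quad n P (x t)).
{ destruct (Hfin t (t + 1)) as [l Hl].
  destruct (free_interval l t) as [d [hd [hd1 Hd]]].
  destruct (Cint t (t + d)) as [i [hi [_ HCx]]]; try lra.
  { intros s u hs hu. apply Hl; try lra.
    intros p hp hc. apply (Hd p hp).
    unfold Rmin, Rmax in hc. destruct (Rle_dec s u); lra. }
  apply (Hc1 i hi). intros r hr.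
  apply (lim_unique t true (fun s => mulmv n (C i) (x s) r)).
  - apply lim_mulmv. apply right_lim_w. apply Hright; lra.
  - apply (lim_ext t true (fun _ => 0)); [|apply lim_const].
    exists d. split; auto. intros s hs. unfold near in hs. symmetry. apply HCx; [lra|exact hr]. }
assert (HW0 : W t0 = quad n P (x t0)).
{ unfold W. replace (al * (t0 - t0)) with 0 by ring. rewrite exp_0. ring. }
assert (HVt : quad n P (x t) = W t * exp (- al * (t - t0))).
{ unfold W. rewrite Rmult_comm, <- Rmult_assoc, <- exp_plus.
  replace (- al * (t - t0) + al * (t - t0)) with 0 by ring. rewrite exp_0. ring. }
pose proof (exp_pos (- al * (t - t0))) as hexp.
pose proof (HKP (x t0)) as hP0.
assert (Hn : nsq n (x t) <= KP / c1 * exp (- al * (t - t0)) * nsq n (x t0)).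
{ assert (c1 * nsq n (x t) <= KP * nsq n (x t0) * exp (- al * (t - t0))).
  { eapply Rle_trans; [exact Hlow|]. rewrite HVt.
    apply Rmult_le_compat_r; lra. }
  apply Rmult_le_reg_l with c1; auto.
  replace (c1 * (KP / c1 * exp (- al * (t - t0)) * nsq n (x t0))) with
    (KP * nsq n (x t0) * exp (- al * (t - t0))) by (field; lra).
  exact H. }
unfold euclid_norm. fold (nsq n (x t)). fold (nsq n (x t0)).
pose proof (nsq_nonneg n (x t)). pose proof (nsq_nonneg n (x t0)).
assert (Hsq : exp (- (al / 2) * (t - t0)) = sqrt (exp (- al * (t - t0)))).
{ rewrite <- (sqrt_square (exp (- (al / 2) * (t - t0)))) by (left; apply exp_pos).
  rewrite <- exp_plus. f_equal. f_equal. field. }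
rewrite Hsq, <- !sqrt_mult; try lra.
- apply sqrt_le_1_alt. exact Hn.
- apply Rmult_le_pos; [apply Rlt_le, Rdiv_lt_0_compat; lra| lra].
- apply Rlt_le, Rdiv_lt_0_compat; lra.
Qed.
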